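(* In a double category, let $\eta$ be a cell with horizontal source $J\colon A\nrightarrow B$, vertical sides $d\colon A\to M$ and $l\colon B\to M$, and horizontal target $1_M$, that defines $l$ as the pointwise left Kan extension of $d$ along $J$. Let $f\colon C\to B$ be a vertical morphism whose conjoint $f^*\colon B\nrightarrow C$ exists, and let $\gamma\colon J(\mathrm{id},f)\Rightarrow J$ be a cartesian cell with vertical sides $\mathrm{id}_A$ and $f$ defining the restriction $J(\mathrm{id},f)\colon A\nrightarrow C$. Then the vertical composite $\eta\circ\gamma$ defines $l\circ f$ as the pointwise left Kan extension of $d$ along $J(\mathrm{id},f)$.
   Context: Double categories: a double category has objects, vertical morphisms (composition $\circ$), horizontal morphisms $J\colon A\nrightarrow B$ (composition $\odot$ in diagrammatic order, units $1_A$) and cells with horizontal source $J\colon A\nrightarrow B$, horizontal target $K\colon C\nrightarrow D$, vertical sides $f\colon A\to C$, $g\colon B\to D$. A cell $\phi\colon J\Rightarrow K$ with sides $f,g$ is cartesian if every cell $H\Rightarrow K$ with sides $f\circ h,g\circ k$ factors uniquely through $\phi$ via a cell $H\Rightarrow J$ with sides $h,k$; then $J=K(f,g)$ is the restriction. The conjoint of $f\colon C\to B$ is the restriction $f^*=1_B(\mathrm{id},f)\colon B\nrightarrow C$. Kan extensions: a cell $\eta$ with horizontal source $J\colon A\nrightarrow B$, vertical sides $d\colon A\to M$, $l\colon B\to M$ and target $1_M$ defines $l$ as the pointwise left Kan extension of $d$ along $J$ if for every $H\colon B\nrightarrow C$ (including $H=1_B$) every cell with horizontal source $J\odot H$, vertical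 sides $d$ and $k\colon C\to M$, target $1_M$ factors uniquely as $\eta\odot\psi$ with $\psi\colon H\Rightarrow 1_M$ having sides $l,k$. *)

(* Defs.v *)
(* A (pseudo) double category presented
   essentially-algebraically: vertical morphisms, horizontal morphisms and
   cells form plain types, equipped with boundary maps and total composition
   operations whose laws are required only on composable (well-typed) data.
   This avoids dependent-type transports for cell equalities. *)

Record DoubleCategory := {
  Ob : Type;
  VM : Type;
  HM : Type;
  Cell : Type;

  vdom : VM -> Ob;
  vcod : VM -> Ob;
  vid : Ob -> VM;
  vcomp : VM -> VM -> VM;            (* vcomp g f = g o f *)
  vdom_id : forall A, vdom (vid A) = A;
  vcod_id : forall A, vcod (vid A) = A;
  vdom_comp : forall f g, vcod f = vdom g -> vdom (vcomp g f) = vdom f;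
  vcod_comp : forall f g, vcod f = vdom g -> vcod (vcomp g f) = vcod g;
  vcomp_id_l : forall f, vcomp (vid (vcod f)) f = f;
  vcomp_id_r : forall f, vcomp f (vid (vdom f)) = f;
  vcomp_assoc : forall f g h, vcod f = vdom g -> vcod g = vdom h ->
      vcomp h (vcomp g f) = vcomp (vcomp h g) f;

  (* horizontal morphisms J : hs J -|-> ht J, composition in diagrammatic order *)
  hs : HM -> Ob;
  ht : HM -> Ob;
  hunit : Ob -> HM;
  hcomp : HM -> HM -> HM;
  hs_unit : forall A, hs (hunit A) = A;
  ht_unit : forall A, ht (hunit A) = A;
  hs_comp : forall J K, ht J = hs K -> hs (hcomp J K) = hs J;
  ht_comp : forall J K, ht J = hs K -> ht (hcomp J K) = ht K;

  (* cells: horizontal source ctop, horizontal target cbot,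
     vertical sides cl (left) and cr (right) *)
  ctop : Cell -> HM;
  cbot : Cell -> HM;
  cl : Cell -> VM;
  cr : Cell -> VM;
  bnd_tl : forall a, vdom (cl a) = hs (ctop a);
  bnd_tr : forall a, vdom (cr a) = ht (ctop a);
  bnd_bl : forall a, vcod (cl a) = hs (cbot a);
  bnd_br : forall a, vcod (cr a) = ht (cbot a);

  (* vertical composition of cells: cvc a b = b o a (a on top of b) *)
  cvc : Cell -> Cell -> Cell;
  ctop_cvc : forall a b, cbot a = ctop b -> ctop (cvc a b) = ctop a;
  cbot_cvc : forall a b, cbot a = ctop b -> cbot (cvc a b) = cbot b;
  cl_cvc : forall a b, cbot a = ctop b -> cl (cvc a b) = vcomp (cl b) (cl a);
  cr_cvc : forall a b, cbot a = ctop b -> cr (cvc a b) = vcomp (cr b) (cr a);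
  cid : HM -> Cell;
  ctop_cid : forall J, ctop (cid J) = J;
  cbot_cid : forall J, cbot (cid J) = J;
  cl_cid : forall J, cl (cid J) = vid (hs J);
  cr_cid : forall J, cr (cid J) = vid (ht J);
  cvc_id_l : forall a, cvc (cid (ctop a)) a = a;
  cvc_id_r : forall a, cvc a (cid (cbot a)) = a;
  cvc_assoc : forall a b c, cbot a = ctop b -> cbot b = ctop c ->
      cvc a (cvc b c) = cvc (cvc a b) c;

  chc : Cell -> Cell -> Cell;
  ctop_chc : forall a b, cr a = cl b -> ctop (chc a b) = hcomp (ctop a) (ctop b);
  cbot_chc : forall a b, cr a = cl b -> cbot (chc a b) = hcomp (cbot a) (cbot b);
  cl_chc : forall a b, cr a = cl b -> cl (chc a b) = cl a;
  cr_chc : forall a b, cr a = cl b -> cr (chc a b) = cr b;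
  cu : VM -> Cell;
  ctop_cu : forall f, ctop (cu f) = hunit (vdom f);
  cbot_cu : forall f, cbot (cu f) = hunit (vcod f);
  cl_cu : forall f, cl (cu f) = f;
  cr_cu : forall f, cr (cu f) = f;
  chc_cid : forall J K, ht J = hs K -> chc (cid J) (cid K) = cid (hcomp J K);
  interchange : forall a b a' b', cbot a = ctop b -> cbot a' = ctop b' ->
      cr a = cl a' -> cr b = cl b' ->
      chc (cvc a b) (cvc a' b') = cvc (chc a a') (chc b b');
  cu_id : forall A, cu (vid A) = cid (hunit A);
  cu_comp : forall f g, vcod f = vdom g -> cu (vcomp g f) = cvc (cu f) (cu g);

  assoc : HM -> HM -> HM -> Cell;
  assoc_inv : HM -> HM -> HM -> Cell;
  ctop_assoc : forall J K L, ht J = hs K -> ht K = hs L ->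
      ctop (assoc J K L) = hcomp (hcomp J K) L;
  cbot_assoc : forall J K L, ht J = hs K -> ht K = hs L ->
      cbot (assoc J K L) = hcomp J (hcomp K L);
  cl_assoc : forall J K L, cl (assoc J K L) = vid (hs J);
  cr_assoc : forall J K L, cr (assoc J K L) = vid (ht L);
  ctop_assoc_inv : forall J K L, ht J = hs K -> ht K = hs L ->
      ctop (assoc_inv J K L) = hcomp J (hcomp K L);
  cbot_assoc_inv : forall J K L, ht J = hs K -> ht K = hs L ->
      cbot (assoc_inv J K L) = hcomp (hcomp J K) L;
  cl_assoc_inv : forall J K L, cl (assoc_inv J K L) = vid (hs J);
  cr_assoc_inv : forall J K L, cr (assoc_inv J K L) = vid (ht L);
  assoc_iso1 : forall J K L, ht J = hs K -> ht K = hs L ->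
      cvc (assoc J K L) (assoc_inv J K L) = cid (hcomp (hcomp J K) L);
  assoc_iso2 : forall J K L, ht J = hs K -> ht K = hs L ->
      cvc (assoc_inv J K L) (assoc J K L) = cid (hcomp J (hcomp K L));
  assoc_nat : forall a b c, cr a = cl b -> cr b = cl c ->
      cvc (chc (chc a b) c) (assoc (cbot a) (cbot b) (cbot c))
      = cvc (assoc (ctop a) (ctop b) (ctop c)) (chc a (chc b c));

  lu : HM -> Cell;
  lu_inv : HM -> Cell;
  ctop_lu : forall J, ctop (lu J) = hcomp (hunit (hs J)) J;
  cbot_lu : forall J, cbot (lu J) = J;
  cl_lu : forall J, cl (lu J) = vid (hs J);
  cr_lu : forall J, cr (lu J) = vid (ht J);
  ctop_lu_inv : forall J, ctop (lu_inv J) = J;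
  cbot_lu_inv : forall J, cbot (lu_inv J) = hcomp (hunit (hs J)) J;
  cl_lu_inv : forall J, cl (lu_inv J) = vid (hs J);
  cr_lu_inv : forall J, cr (lu_inv J) = vid (ht J);
  lu_iso1 : forall J, cvc (lu J) (lu_inv J) = cid (hcomp (hunit (hs J)) J);
  lu_iso2 : forall J, cvc (lu_inv J) (lu J) = cid J;
  lu_nat : forall a, cvc (chc (cu (cl a)) a) (lu (cbot a)) = cvc (lu (ctop a)) a;

  ru : HM -> Cell;
  ru_inv : HM -> Cell;
  ctop_ru : forall J, ctop (ru J) = hcomp J (hunit (ht J));
  cbot_ru : forall J, cbot (ru J) = J;
  cl_ru : forall J, cl (ru J) = vid (hs J);
  cr_ru : forall J, cr (ru J) = vid (ht J);
  ctop_ru_inv : forall J, ctop (ru_inv J) = J;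
  cbot_ru_inv : forall J, cbot (ru_inv J) = hcomp J (hunit (ht J));
  cl_ru_inv : forall J, cl (ru_inv J) = vid (hs J);
  cr_ru_inv : forall J, cr (ru_inv J) = vid (ht J);
  ru_iso1 : forall J, cvc (ru J) (ru_inv J) = cid (hcomp J (hunit (ht J)));
  ru_iso2 : forall J, cvc (ru_inv J) (ru J) = cid J;
  ru_nat : forall a, cvc (chc a (cu (cr a))) (ru (cbot a)) = cvc (ru (ctop a)) a;

  pentagon : forall J K L N, ht J = hs K -> ht K = hs L -> ht L = hs N ->
      cvc (assoc (hcomp J K) L N) (assoc J K (hcomp L N))
      = cvc (cvc (chc (assoc J K L) (cid N)) (assoc J (hcomp K L) N))
            (chc (cid J) (assoc K L N));
  triangle : forall J K, ht J = hs K ->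
      cvc (assoc J (hunit (ht J)) K) (chc (cid J) (lu K)) = chc (ru J) (cid K)
}.

Arguments vdom {_} _. Arguments vcod {_} _. Arguments vid {_} _.
Arguments vcomp {_} _ _. Arguments hs {_} _. Arguments ht {_} _.
Arguments hunit {_} _. Arguments hcomp {_} _ _.
Arguments ctop {_} _. Arguments cbot {_} _. Arguments cl {_} _. Arguments cr {_} _.
Arguments cvc {_} _ _. Arguments cid {_} _. Arguments chc {_} _ _.
Arguments cu {_} _. Arguments assoc {_} _ _ _. Arguments assoc_inv {_} _ _ _.
Arguments lu {_} _. Arguments lu_inv {_} _. Arguments ru {_} _. Arguments ru_inv {_} _.

Definition cartesian {D : DoubleCategory} (phi : Cell D) : Prop :=
  forall (H : HM D) (h k : VM D) (psi : Cell D),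
    vcod h = vdom (cl phi) -> vcod k = vdom (cr phi) ->
    ctop psi = H -> cbot psi = cbot phi ->
    cl psi = vcomp (cl phi) h -> cr psi = vcomp (cr phi) k ->
    exists! chi : Cell D,
      ctop chi = H /\ cbot chi = ctop phi /\ cl chi = h /\ cr chi = k /\
      cvc chi phi = psi.

(* The conjoint f^* = 1_B(id, f) : B -|-> C of f : C -> B exists:
   there is a cartesian cell f^* => 1_B with sides id_B and f. *)
Definition has_conjoint {D : DoubleCategory} (f : VM D) : Prop :=
  exists (fs : HM D) (c : Cell D),
    ctop c = fs /\ cbot c = hunit (vcod f) /\ cl c = vid (vcod f) /\
    cr c = f /\ cartesian c.

(* For H : B -|-> C, the horizontal composite
   eta (.) psi has target 1_M (.) 1_M, which is identified with 1_M via the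
   unitor lu (1_M) (= ru (1_M) by coherence). *)
Definition pw_lan {D : DoubleCategory} (eta : Cell D) (J : HM D)
    (d l : VM D) (M : Ob D) : Prop :=
  ctop eta = J /\ cbot eta = hunit M /\ cl eta = d /\ cr eta = l /\
  forall (H : HM D) (k : VM D) (phi : Cell D),
    hs H = ht J ->
    ctop phi = hcomp J H -> cbot phi = hunit M ->
    cl phi = d -> cr phi = k ->
    exists! psi : Cell D,
      ctop psi = H /\ cbot psi = hunit M /\ cl psi = l /\ cr psi = k /\
      phi = cvc (chc eta psi) (lu (hunit M)).

(* Main.v *)
Require Import Defs.

Definition tc {D : DoubleCategory} (a : Cell D) T Bt L R :=
  ctop a = T /\ cbot a = Bt /\ cl a = L /\ cr a = R.

Lemma tc_conv {D} (a : Cell D) T Bt L R T' B' L' R' :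
  tc a T Bt L R -> T = T' -> Bt = B' -> L = L' -> R = R' -> tc a T' B' L' R'.
Proof. intros H -> -> -> ->; exact H. Qed.

Lemma tc_cvc {D} (a b : Cell D) T X Bt L1 R1 L2 R2 :
  tc a T X L1 R1 -> tc b X Bt L2 R2 -> tc (cvc a b) T Bt (vcomp L2 L1) (vcomp R2 R1).
Proof.
  intros (h1&h2&h3&h4) (k1&k2&k3&k4).
  assert (E : cbot a = ctop b) by congruence.
  repeat split.
  - rewrite ctop_cvc; auto.
  - rewrite cbot_cvc; auto.
  - rewrite cl_cvc; congruence.
  - rewrite cr_cvc; congruence.
Qed.

Lemma tc_chc {D} (a b : Cell D) T1 B1 L R1 T2 B2 R2 :
  tc a T1 B1 L R1 -> tc b T2 B2 R1 R2 -> tc (chc a b) (hcomp T1 T2) (hcomp B1 B2) L R2.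
Proof.
  intros (h1&h2&h3&h4) (k1&k2&k3&k4).
  assert (E : cr a = cl b) by congruence.
  repeat split.
  - rewrite ctop_chc; congruence.
  - rewrite cbot_chc; congruence.
  - rewrite cl_chc; congruence.
  - rewrite cr_chc; congruence.
Qed.

Lemma tc_cid {D} (J : HM D) : tc (cid J) J J (vid (hs J)) (vid (ht J)).
Proof. repeat split; auto using ctop_cid, cbot_cid, cl_cid, cr_cid. Qed.

Lemma tc_cu {D} (f : VM D) : tc (cu f) (hunit (vdom f)) (hunit (vcod f)) f f.
Proof. repeat split; auto using ctop_cu, cbot_cu, cl_cu, cr_cu. Qed.

Lemma tc_assoc {D} (J K L : HM D) : ht J = hs K -> ht K = hs L ->
  tc (assoc J K L) (hcomp (hcomp J K) L) (hcomp J (hcomp K L)) (vid (hs J)) (vid (ht L)).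
Proof. intros; repeat split; auto using ctop_assoc, cbot_assoc, cl_assoc, cr_assoc. Qed.

Lemma tc_assoc_inv {D} (J K L : HM D) : ht J = hs K -> ht K = hs L ->
  tc (assoc_inv J K L) (hcomp J (hcomp K L)) (hcomp (hcomp J K) L) (vid (hs J)) (vid (ht L)).
Proof. intros; repeat split; auto using ctop_assoc_inv, cbot_assoc_inv, cl_assoc_inv, cr_assoc_inv. Qed.

Lemma tc_lu {D} (J : HM D) : tc (lu J) (hcomp (hunit (hs J)) J) J (vid (hs J)) (vid (ht J)).
Proof. repeat split; auto using ctop_lu, cbot_lu, cl_lu, cr_lu. Qed.
Lemma tc_lu_inv {D} (J : HM D) : tc (lu_inv J) J (hcomp (hunit (hs J)) J) (vid (hs J)) (vid (ht J)).
Proof. repeat split; auto using ctop_lu_inv, cbot_lu_inv, cl_lu_inv, cr_lu_inv. Qed.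
Lemma tc_ru {D} (J : HM D) : tc (ru J) (hcomp J (hunit (ht J))) J (vid (hs J)) (vid (ht J)).
Proof. repeat split; auto using ctop_ru, cbot_ru, cl_ru, cr_ru. Qed.
Lemma tc_ru_inv {D} (J : HM D) : tc (ru_inv J) J (hcomp J (hunit (ht J))) (vid (hs J)) (vid (ht J)).
Proof. repeat split; auto using ctop_ru_inv, cbot_ru_inv, cl_ru_inv, cr_ru_inv. Qed.

Lemma cvcA {D} (a b c : Cell D) T X Y Bt L1 R1 L2 R2 L3 R3 :
  tc a T X L1 R1 -> tc b X Y L2 R2 -> tc c Y Bt L3 R3 ->
  cvc a (cvc b c) = cvc (cvc a b) c.
Proof. intros (?&?&?&?) (?&?&?&?) (?&?&?&?); apply cvc_assoc; congruence. Qed.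

Lemma cvc1l {D} (a : Cell D) T Bt L R : tc a T Bt L R -> cvc (cid T) a = a.
Proof. intros (<-&?&?&?); apply cvc_id_l. Qed.
Lemma cvc1r {D} (a : Cell D) T Bt L R : tc a T Bt L R -> cvc a (cid Bt) = a.
Proof. intros (?&<-&?&?); apply cvc_id_r. Qed.

Lemma xchg {D} (a b a' b' : Cell D) T1 X1 B1 L1 R1 L2 R2 T2 X2 B2 R1' R2' :
  tc a T1 X1 L1 R1 -> tc b X1 B1 L2 R2 -> tc a' T2 X2 R1 R1' -> tc b' X2 B2 R2 R2' ->
  chc (cvc a b) (cvc a' b') = cvc (chc a a') (chc b b').
Proof. intros (?&?&?&?) (?&?&?&?) (?&?&?&?) (?&?&?&?); apply interchange; congruence. Qed.

Lemma chc11 {D} (J K : HM D) : ht J = hs K -> chc (cid J) (cid K) = cid (hcomp J K).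
Proof. apply chc_cid. Qed.

Lemma vidl {D} (f : VM D) X : vcod f = X -> vcomp (vid X) f = f.
Proof. intros <-; apply vcomp_id_l. Qed.
Lemma vidr {D} (f : VM D) X : vdom f = X -> vcomp f (vid X) = f.
Proof. intros <-; apply vcomp_id_r. Qed.

Ltac ob := first [reflexivity | congruence
  | progress rewrite ?vdom_id, ?vcod_id, ?hs_unit, ?ht_unit; ob
  | rewrite hs_comp by ob; ob | rewrite ht_comp by ob; ob
  | rewrite vdom_comp by ob; ob | rewrite vcod_comp by ob; ob
  | rewrite vidl by ob; ob | rewrite vidr by ob; ob ].

Ltac tcs := match goal with
 | |- tc (cvc _ _) _ _ _ _ => eapply tc_conv; [eapply tc_cvc; tcs | ob | ob | ob | ob]
 | |- tc (chc _ _) _ _ _ _ => eapply tc_conv; [eapply tc_chc; tcs | ob | ob | ob | ob]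
 | |- tc (cid _) _ _ _ _ => eapply tc_conv; [apply tc_cid | ob | ob | ob | ob]
 | |- tc (cu _) _ _ _ _ => eapply tc_conv; [apply tc_cu | ob | ob | ob | ob]
 | |- tc (lu _) _ _ _ _ => eapply tc_conv; [apply tc_lu | ob | ob | ob | ob]
 | |- tc (lu_inv _) _ _ _ _ => eapply tc_conv; [apply tc_lu_inv | ob | ob | ob | ob]
 | |- tc (ru _) _ _ _ _ => eapply tc_conv; [apply tc_ru | ob | ob | ob | ob]
 | |- tc (ru_inv _) _ _ _ _ => eapply tc_conv; [apply tc_ru_inv | ob | ob | ob | ob]
 | |- tc (assoc _ _ _) _ _ _ _ => eapply tc_conv; [apply tc_assoc; ob | ob | ob | ob | ob]
 | |- tc (assoc_inv _ _ _) _ _ _ _ => eapply tc_conv; [apply tc_assoc_inv; ob | ob | ob | ob | ob]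
 | H : tc ?a _ _ _ _ |- tc ?a _ _ _ _ => eapply tc_conv; [exact H | ob | ob | ob | ob]
end.

Ltac bnd := repeat match goal with
 | |- context [ctop ?x] => let H := fresh in eassert (H : tc x _ _ _ _) by tcs;
      destruct H as (H&_&_&_); rewrite H; clear H
 | |- context [cbot ?x] => let H := fresh in eassert (H : tc x _ _ _ _) by tcs;
      destruct H as (_&H&_&_); rewrite H; clear H
 | |- context [cl ?x] => let H := fresh in eassert (H : tc x _ _ _ _) by tcs;
      destruct H as (_&_&H&_); rewrite H; clear H
 | |- context [cr ?x] => let H := fresh in eassert (H : tc x _ _ _ _) by tcs;
      destruct H as (_&_&_&H); rewrite H; clear H
 end; ob.

Lemma c1l {D} (a : Cell D) T : ctop a = T -> cvc (cid T) a = a.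
Proof. intros <-; apply cvc_id_l. Qed.
Lemma c1r {D} (a : Cell D) T : cbot a = T -> cvc a (cid T) = a.
Proof. intros <-; apply cvc_id_r. Qed.
Lemma lunat {D} (a : Cell D) f K T : cl a = f -> cbot a = K -> ctop a = T ->
  cvc (chc (cu f) a) (lu K) = cvc (lu T) a.
Proof. intros <- <- <-; apply lu_nat. Qed.
Lemma runat {D} (a : Cell D) f K T : cr a = f -> cbot a = K -> ctop a = T ->
  cvc (chc a (cu f)) (ru K) = cvc (ru T) a.
Proof. intros <- <- <-; apply ru_nat. Qed.

Lemma ainat {D} (a b c : Cell D) Ta Ba La Ra Tb Bb Rb Tc Bc Rc :
  tc a Ta Ba La Ra -> tc b Tb Bb Ra Rb -> tc c Tc Bc Rb Rc ->
  cvc (chc a (chc b c)) (assoc_inv Ba Bb Bc) = cvc (assoc_inv Ta Tb Tc) (chc (chc a b) c).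
Proof.
  intros ha hb hc.
  pose proof ha as (a1&a2&a3&a4). pose proof hb as (b1&b2&b3&b4). pose proof hc as (c1&c2&c3&c4).
  assert (e1 : ht Ta = hs Tb) by (rewrite <- a1, <- b1, <- bnd_tr, <- bnd_tl; congruence).
  assert (e2 : ht Tb = hs Tc) by (rewrite <- c1, <- b1, <- bnd_tr, <- bnd_tl; congruence).
  assert (e3 : ht Ba = hs Bb) by (rewrite <- a2, <- b2, <- bnd_br, <- bnd_bl; congruence).
  assert (e4 : ht Bb = hs Bc) by (rewrite <- c2, <- b2, <- bnd_br, <- bnd_bl; congruence).
  pose proof (assoc_nat D a b c) as N. rewrite a4, b4, a1, b1, c1, a2, b2, c2 in N.
  specialize (N (eq_sym b3) (eq_sym c3)).
  symmetry.
  rewrite <- (c1r (cvc (assoc_inv Ta Tb Tc) (chc (chc a b) c)) (hcomp (hcomp Ba Bb) Bc)) by bnd.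
  rewrite <- (assoc_iso1 _ Ba Bb Bc) by bnd.
  rewrite <- (cvc_assoc _ (assoc_inv Ta Tb Tc)) by bnd.
  rewrite (cvc_assoc _ (chc (chc a b) c)) by bnd.
  rewrite N.
  rewrite <- (cvc_assoc _ (assoc Ta Tb Tc)) by bnd.
  rewrite (cvc_assoc _ (assoc_inv Ta Tb Tc)) by bnd.
  rewrite assoc_iso2 by bnd.
  rewrite c1l by bnd. reflexivity.
Qed.

Lemma triinv {D} (J K : HM D) : ht J = hs K ->
  cvc (assoc_inv J (hunit (ht J)) K) (chc (ru J) (cid K)) = chc (cid J) (lu K).
Proof.
  intros e. rewrite <- triangle by auto.
  rewrite (cvc_assoc _ (assoc_inv _ _ _)) by bnd.
  rewrite assoc_iso2 by bnd. rewrite c1l by bnd. reflexivity.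
Qed.

Theorem lemma4p4 (D : DoubleCategory) (A B C M : Ob D)
    (J JR : HM D) (d l f : VM D) (eta gamma : Cell D) :
    hs J = A -> ht J = B ->
    vdom d = A -> vcod d = M -> vdom l = B -> vcod l = M ->
    vdom f = C -> vcod f = B ->
    pw_lan eta J d l M ->
    has_conjoint f ->
    ctop gamma = JR -> cbot gamma = J -> cl gamma = vid A -> cr gamma = f ->
    cartesian gamma ->
    pw_lan (cvc gamma eta) JR d (vcomp l f) M.
Proof.
  intros hJs hJt hd1 hd2 hl1 hl2 hf1 hf2 [e1 [e2 [e3 [e4 UP]]]]
    [F [c [c1 [c2 [c3 [c4 cartc]]]]]] g1 g2 g3 g4 cartg.
  rewrite hf2 in c2, c3.
  assert (teta : tc eta J (hunit M) d l) by (repeat split; auto).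
  assert (tg : tc gamma JR J (vid A) f) by (repeat split; auto).
  assert (tcc : tc c F (hunit B) (vid B) f) by (repeat split; auto).
  assert (hJRs : hs JR = A) by (rewrite <- g1, <- bnd_tl, g3; apply vdom_id).
  assert (hJRt : ht JR = C) by (rewrite <- g1, <- bnd_tr, g4; auto).
  assert (hFs : hs F = B) by (rewrite <- c1, <- bnd_tl, c3; apply vdom_id).
  assert (hFt : ht F = C) by (rewrite <- c1, <- bnd_tr, c4; auto).
  clear e1 e2 e3 e4 c1 c2 c3 c4 g1 g2 g3 g4.
  (* unit of the conjoint *)
  destruct (cartc (hunit C) f (vid C) (cu f)) as [u [[u1 [u2 [u3 [u4 uc]]]] _]];
    try bnd.
  assert (tu : tc u (hunit C) F f (vid C)) by (repeat split; [exact u1 | rewrite u2; bnd | exact u3 | exact u4]).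
  clear u1 u2 u3 u4.
  destruct (cartg (hcomp J F) (vid A) (vid C) (cvc (chc (cid J) c) (ru J)))
    as [th [[t1 [t2 [t3 [t4 thg]]]] _]]; try bnd.
  assert (tth : tc th (hcomp J F) JR (vid A) (vid C)) by (repeat split; [exact t1 | rewrite t2; bnd | exact t3 | exact t4]).
  clear t1 t2 t3 t4.
  assert (K : cvc (chc gamma u) th = ru JR).
  { destruct (cartg (hcomp JR (hunit C)) (vid A) (vid C) (cvc (ru JR) gamma))
      as [x [_ Uq]]; try bnd.
    transitivity x; [symmetry|]; apply Uq; (split; [|split; [|split; [|split]]]); try bnd.
    rewrite <- cvc_assoc by bnd. rewrite thg.
    rewrite cvc_assoc by bnd. rewrite <- interchange by bnd.
    rewrite uc. rewrite c1r by bnd.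
    apply runat; bnd. }
  split; [bnd|]. split; [bnd|]. split; [bnd|]. split; [bnd|].
  intros H k phi hH p1 p2 p3 p4.
  rewrite hJRt in hH.
  assert (tphi : tc phi (hcomp JR H) (hunit M) d k) by (repeat split; auto).
  assert (hk1 : vdom k = ht H) by (rewrite <- p4, bnd_tr, p1; bnd).
  assert (hk2 : vcod k = M) by (rewrite <- p4, bnd_br, p2; bnd).
  clear p1 p2 p3 p4.
  set (phi' := cvc (assoc_inv J F H) (cvc (chc th (cid H)) phi)).
  assert (tphi' : tc phi' (hcomp J (hcomp F H)) (hunit M) d k) by (unfold phi'; tcs).
  destruct (UP (hcomp F H) k phi') as [psi' [[q1 [q2 [q3 [q4 qe]]]] Uq]];
    try (destruct tphi' as (?&?&?&?); bnd).
  assert (tpsi' : tc psi' (hcomp F H) (hunit M) l k) by (repeat split; auto).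
  clear q1 q2 q3 q4.
  set (P := cvc (lu_inv H) (chc u (cid H))).
  assert (tP : tc P H (hcomp F H) f (vid (ht H))) by (unfold P; tcs).
  assert (Q : cvc (cvc (chc gamma P) (assoc_inv J F H)) (chc th (cid H)) = cid (hcomp JR H)).
  { assert (E1 : chc gamma P = cvc (chc (cid JR) (lu_inv H)) (chc gamma (chc u (cid H)))).
    { unfold P. rewrite <- interchange by bnd. rewrite c1l by bnd. reflexivity. }
    assert (E2 : cvc (chc gamma (chc u (cid H))) (assoc_inv J F H)
               = cvc (assoc_inv JR (hunit C) H) (chc (chc gamma u) (cid H))).
    { apply (ainat _ _ _ JR J (vid A) f (hunit C) F (vid C) H H (vid (ht H))); tcs. }
    assert (E3 : cvc (chc (chc gamma u) (cid H)) (chc th (cid H)) = chc (ru JR) (cid H)).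
    { rewrite <- interchange by bnd. rewrite K. rewrite c1r by bnd. reflexivity. }
    pose proof (triinv JR H) as T. rewrite hJRt in T. specialize (T (eq_sym hH)).
    rewrite E1.
    rewrite <- (cvc_assoc _ (chc (cid JR) (lu_inv H))) by bnd.
    rewrite E2.
    rewrite <- (cvc_assoc _ (chc (cid JR) (lu_inv H))) by bnd.
    rewrite <- (cvc_assoc _ (assoc_inv JR (hunit C) H)) by bnd.
    rewrite E3, T.
    rewrite <- interchange by bnd. rewrite lu_iso2, c1l by bnd.
    apply chc_cid. bnd. }
  exists (cvc P psi').
  split.
  { split; [bnd|]. split; [bnd|]. split; [bnd|]. split; [bnd|].
    rewrite interchange by bnd.
    rewrite <- (cvc_assoc _ (chc gamma P)) by bnd.
    rewrite <- qe. unfold phi'.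
    rewrite (cvc_assoc _ (chc gamma P)) by bnd.
    rewrite (cvc_assoc _ (cvc (chc gamma P) (assoc_inv J F H))) by bnd.
    rewrite Q. rewrite c1l by bnd. reflexivity. }
  intros psi2 [r1 [r2 [r3 [r4 re]]]].
  assert (tpsi2 : tc psi2 H (hunit M) (vcomp l f) k) by (repeat split; auto).
  clear r1 r2 r3 r4.
  set (Y := cvc c (cu l)).
  assert (tY : tc Y F (hunit M) l (vcomp l f)) by (unfold Y; tcs).
  set (psi2' := cvc (chc Y psi2) (lu (hunit M))).
  assert (tpsi2' : tc psi2' (hcomp F H) (hunit M) l k) by (unfold psi2'; tcs).
  assert (Ha : cvc P psi2' = psi2).
  { unfold P, psi2'.
    rewrite <- (cvc_assoc _ (lu_inv H)) by bnd.
    rewrite (cvc_assoc _ (chc u (cid H))) by bnd.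
    rewrite <- interchange by bnd.
    unfold Y. rewrite (cvc_assoc _ u) by bnd. rewrite uc.
    rewrite <- cu_comp by bnd. rewrite c1l by bnd.
    rewrite (lunat psi2 (vcomp l f) (hunit M) H) by bnd.
    rewrite (cvc_assoc _ (lu_inv H)) by bnd.
    rewrite lu_iso2. apply c1l. bnd. }
  assert (Hb : psi' = psi2').
  { apply Uq. split; [bnd|]. split; [bnd|]. split; [bnd|]. split; [bnd|].
    unfold phi'. rewrite re.
    rewrite (cvc_assoc _ (chc th (cid H))) by bnd.
    rewrite <- interchange by bnd.
    rewrite c1l by bnd.
    rewrite (cvc_assoc _ th) by bnd. rewrite thg.
    rewrite <- (cvc_assoc _ (chc (cid J) c)) by bnd.
    rewrite <- (runat eta l (hunit M) J) by bnd.
    rewrite (cvc_assoc _ (chc (cid J) c)) by bnd.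
    rewrite <- interchange by bnd.
    rewrite c1l by bnd. fold Y.
    assert (E : chc (cvc (chc eta Y) (ru (hunit M))) psi2
              = cvc (chc (chc eta Y) psi2) (chc (ru (hunit M)) (cid (hunit M)))).
    { rewrite <- interchange by bnd. rewrite c1r by bnd. reflexivity. }
    rewrite E.
    rewrite <- (cvc_assoc _ (chc (chc eta Y) psi2)) by bnd.
    rewrite (cvc_assoc _ (assoc_inv J F H)) by bnd.
    rewrite <- (ainat eta Y psi2 J (hunit M) d l F (hunit M) (vcomp l f) H (hunit M) k)
      by tcs.
    pose proof (triinv (hunit M) (hunit M)) as T. rewrite ht_unit in T.
    specialize (T (eq_sym (hs_unit _ M))).
    rewrite <- (cvc_assoc _ (chc eta (chc Y psi2))) by bnd.
    rewrite (cvc_assoc _ (assoc_inv (hunit M) (hunit M) (hunit M))) by bnd.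
    rewrite T.
    unfold psi2'.
    assert (E' : chc eta (cvc (chc Y psi2) (lu (hunit M)))
       = cvc (chc eta (chc Y psi2)) (chc (cid (hunit M)) (lu (hunit M)))).
    { rewrite <- interchange by bnd. rewrite c1r by bnd. reflexivity. }
    rewrite E'.
    rewrite cvc_assoc by bnd. reflexivity. }
  rewrite Hb. exact Ha.
Qed.
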